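(* Let $q \neq 2$ be a prime power, let $n \geq 1$ be an integer, and let $W$ be the $n$-dimensional affine space over the finite field $\mathbb{F}_q$. Let $A_1,\ldots,A_m$ and $B_1,\ldots,B_m$ be affine subspaces of $W$ such that $A_i \cap B_i = \emptyset$ for each $1 \leq i \leq m$, and $A_i \cap B_j \neq \emptyset$ whenever $1 \leq i < j \leq m$. Then $m \leq q^n + 1$.
   Context: An affine subspace of $W = \mathbb{F}_q^n$ is a translate $v + U$ of a linear subspace $U$ of $\mathbb{F}_q^n$. *)

(* Defs.v *)
From mathcomp Require Import all_boot all_order all_algebra.
Set Implicit Arguments. Unset Strict Implicit. Unset Printing Implicit Defensive.
Import GRing.Theory.
Local Open Scope ring_scope.

(* W = F_q^n is modelled as row vectors 'rV[F]_n over a finite field F.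
   A linear subspace U of W is the row space of a square matrix U : 'M[F]_n
   (every subspace arises this way). *)
Definition affine_translate (F : finFieldType) (n : nat)
    (v : 'rV[F]_n) (U : 'M[F]_n) : {set 'rV[F]_n} :=
  [set x | (x - v <= U)%MS].

Definition is_affine_subspace (F : finFieldType) (n : nat)
    (S : {set 'rV[F]_n}) : Prop :=
  exists (v : 'rV[F]_n) (U : 'M[F]_n), S = affine_translate v U.

(* Main.v *)
Require Import Defs.
From mathcomp Require Import all_boot all_order all_algebra.
From Stdlib Require Import ClassicalEpsilon.
Set Implicit Arguments. Unset Strict Implicit. Unset Printing Implicit Defensive.
Import GRing.Theory.
Local Open Scope ring_scope.

Definition par (F : finFieldType) n (u v : 'cV[F]_n) : bool :=
  [exists a : F, (a != 0) && (v == a *: u)].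

Lemma parxx (F : finFieldType) n (u : 'cV[F]_n) : par u u.
Proof. apply/existsP; exists 1; by rewrite oner_eq0 scale1r eqxx. Qed.

Lemma par_sym (F : finFieldType) n (u v : 'cV[F]_n) : par u v -> par v u.
Proof.
case/existsP=> a /andP[a0 /eqP->]; apply/existsP; exists a^-1.
by rewrite invr_eq0 a0 scalerA mulVf // scale1r eqxx.
Qed.

Lemma par_trans (F : finFieldType) n (u v w : 'cV[F]_n) :
  par u v -> par v w -> par u w.
Proof.
case/existsP=> a /andP[a0 /eqP->]; case/existsP=> b /andP[b0 /eqP->].
apply/existsP; exists (b * a); by rewrite mulf_neq0 // scalerA eqxx.
Qed.

Definition rep (F : finFieldType) n (u : 'cV[F]_n) :=
  odflt u [pick w | par u w].

Lemma rep_par (F : finFieldType) n (u : 'cV[F]_n) : par u (rep u).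
Proof. rewrite /rep; case: pickP => [w //|H]; by rewrite /= parxx. Qed.

Lemma rep_eq (F : finFieldType) n (u v : 'cV[F]_n) : par u v -> rep u = rep v.
Proof.
move=> uv; rewrite /rep.
have -> : [pick w | par u w] = [pick w | par v w].
  apply: eq_pick => w /=; apply/idP/idP => H.
  - exact: par_trans (par_sym uv) H.
  - exact: par_trans uv H.
case: pickP => [w //|H]; by move: (H v); rewrite /= parxx.
Qed.

Lemma par_neq0 (F : finFieldType) n (u v : 'cV[F]_n) : u != 0 -> par u v -> v != 0.
Proof.
move=> u0; case/existsP=> a /andP[a0 /eqP->]; by rewrite scalemx_eq0 negb_or a0.
Qed.

Definition goodP (F : finFieldType) n (A B : {set 'rV[F]_n}) (r : 'cV[F]_n) :=
  [/\ (forall x y, x \in A -> y \in A -> x *m r = y *m r),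
      (forall x y, x \in B -> y \in B -> x *m r = y *m r) &
      (forall x y, x \in A -> y \in B -> x *m r != y *m r)].

Lemma good_par (F : finFieldType) n (A B : {set 'rV[F]_n}) (u v : 'cV[F]_n) :
  goodP A B u -> par u v -> goodP A B v.
Proof.
case=> H1 H2 H3; case/existsP=> a /andP[a0 /eqP->].
split=> x y xA yA; rewrite -!scalemxAr.
- by rewrite (H1 x y).
- by rewrite (H2 x y).
- apply: contra (H3 x y xA yA) => /eqP E.
  by rewrite -[x *m u](scalerK a0) E scalerK.
Qed.

Lemma good_exists (F : finFieldType) n (A B : {set 'rV[F]_n}) :
  is_affine_subspace A -> is_affine_subspace B -> A :&: B = set0 ->
  exists r, goodP A B r /\ r != 0.
Proof.
move=> [v [U ->]] [w [V ->]] AB.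
have vA : v \in affine_translate v U by rewrite inE subrr sub0mx.
have wB : w \in affine_translate w V by rewrite inE subrr sub0mx.
have nsub : ~~ (w - v <= U + V)%MS.
  apply/negP => /sub_addsmxP [[u1 u2] /= E].
  have : v + u1 *m U \in affine_translate v U :&: affine_translate w V.
    rewrite inE !inE [v + _]addrC addrK submxMl /=.
    have -> : u1 *m U + v - w = - (u2 *m V).
      rewrite -[w](subrK v) E !opprD !addrA addrC !addrA.
      by rewrite [- v + _]addrC subrK subrr add0r.
    by rewrite -mulNmx submxMl.
  by rewrite AB inE.
set K := cokermx (U + V)%MS.
have nz : (w - v) *m K != 0 by rewrite -submxE.
have [k Hk] : exists k, ((w - v) *m K) 0 k != 0.
  apply/existsP; apply: contraR nz => /existsPn H.
  apply/eqP/matrixP => i j; rewrite ord1 [RHS]mxE; move: (H j); rewrite negbK; move/eqP; exact: id.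
pose r := K *m delta_mx k (0 : 'I_1).
have Ur : U *m r = 0.
  by rewrite /r mulmxA; move: (addsmxSl U V); rewrite submxE => /eqP->; rewrite mul0mx.
have Vr : V *m r = 0.
  by rewrite /r mulmxA; move: (addsmxSr U V); rewrite submxE => /eqP->; rewrite mul0mx.
have cA : forall x, x \in affine_translate v U -> x *m r = v *m r.
  move=> x; rewrite inE => /submxP [D E]; apply/eqP; rewrite -subr_eq0 -mulmxBl E.
  by rewrite -mulmxA Ur mulmx0.
have cB : forall x, x \in affine_translate w V -> x *m r = w *m r.
  move=> x; rewrite inE => /submxP [D E]; apply/eqP; rewrite -subr_eq0 -mulmxBl E.
  by rewrite -mulmxA Vr mulmx0.
have wvr : w *m r != v *m r.
  rewrite -subr_eq0 -mulmxBl /r mulmxA.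
  apply: contra Hk => /eqP E.
  move: E; rewrite -colE => /matrixP/(_ 0 0); rewrite !mxE => ->; exact: eqxx.
exists r; split; last first.
  by apply: contraNneq wvr => ->; rewrite !mulmx0.
split=> x y xA yA.
- by rewrite (cA x) ?(cA y).
- by rewrite (cB x) ?(cB y).
- by rewrite (cA x) ?(cB y) // eq_sym.
Qed.
Lemma three (F : finFieldType) n (A1 B1 A2 B2 A3 B3 : {set 'rV[F]_n}) r :
  goodP A1 B1 r -> goodP A2 B2 r -> goodP A3 B3 r ->
  A1 :&: B2 != set0 -> A1 :&: B3 != set0 -> A2 :&: B3 != set0 -> False.
Proof.
case=> g1 _ _ [_ _ g2] [_ g3 _].
case/set0Pn=> x1 /setIP[x1A1 x1B2]; case/set0Pn=> x2 /setIP[x2A1 x2B3].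
case/set0Pn=> x3 /setIP[x3A2 x3B3].
move: (g2 x3 x1 x3A2 x1B2); by rewrite -(g3 x2 x3) // (g1 x1 x2) // eqxx.
Qed.

Theorem theorem1p4 (F : finFieldType) (n m : nat)
    (A B : 'I_m -> {set 'rV[F]_n}) :
  #|F| != 2 -> (1 <= n)%N ->
  (forall i, is_affine_subspace (A i)) ->
  (forall i, is_affine_subspace (B i)) ->
  (forall i, A i :&: B i = set0) ->
  (forall i j : 'I_m, (i < j)%N -> A i :&: B j != set0) ->
  (m <= #|F| ^ n + 1)%N.
Proof.
move=> q2 _ hA hB hAB hABne.
have [c [c0 c1]] : exists c : F, c != 0 /\ c != 1.
  case: (boolP [exists c : F, (c != 0) && (c != 1)]) => [/existsP [c /andP[? ?]]|/existsPn H].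
    by exists c.
  exfalso; move/eqP: q2; apply.
  have -> : #|F| = #|[set (0:F); 1]|.
    apply: eq_card => x; rewrite !inE; move: (H x); rewrite negb_and !negbK.
    by move=> ->.
  by rewrite cards2 eq_sym oner_neq0.
have [l Hl] : exists l : 'I_m -> 'cV[F]_n, forall i, goodP (A i) (B i) (l i) /\ l i != 0.
  exists (fun i => proj1_sig (constructive_indefinite_description _ (good_exists (hA i) (hB i) (hAB i)))).
  move=> i; by case: constructive_indefinite_description.
pose r i := rep (l i).
have rpar i : par (l i) (r i) := rep_par _.
have rgood i : goodP (A i) (B i) (r i) := good_par (Hl i).1 (rpar i).
have rnz i : r i != 0 := par_neq0 (Hl i).2 (rpar i).
pose flag (i : 'I_m) := [exists j : 'I_m, (j < i)%N && par (l j) (l i)].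
pose s (i : 'I_m) : F := if flag i then c else 1.
have s0 i : s i != 0 by rewrite /s; case: ifP => _; rewrite ?oner_eq0.
pose g (i : 'I_m) := s i *: r i.
have key : forall i j : 'I_m, (i < j)%N -> par (l i) (l j) -> g i != g j.
  move=> i j ij pij.
  have rij : r i = r j := rep_eq pij.
  have fj : flag j by apply/existsP; exists i; rewrite ij.
  have fi : ~~ flag i.
    apply/existsP => -[k /andP[ki pki]].
    have rk : r k = r j by rewrite /r (rep_eq pki).
    have gk := rgood k; have gi := rgood i; rewrite rk in gk; rewrite rij in gi.
    apply: (three gk gi (rgood j)); apply: hABne => //; exact: ltn_trans ki ij.
  rewrite /g /s (negbTE fi) fj scale1r rij.
  apply/eqP => E.
  have : (c - 1) *: r j == 0 by rewrite scalerBl -E scale1r subrr.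
  by rewrite scalemx_eq0 subr_eq0 (negbTE c1) (negbTE (rnz j)).
have ginj : injective g.
  move=> i j E; apply/eqP; apply/negPn/negP => nij.
  have pij : par (l i) (l j).
    have prr : par (r i) (r j).
      apply/existsP; exists ((s j)^-1 * s i); rewrite mulf_neq0 ?invr_eq0 //=.
      rewrite -scalerA; move: E; rewrite /g => ->.
      by rewrite scalerA mulVf // scale1r.
    exact: par_trans (rpar i) (par_trans prr (par_sym (rpar j))).
  case: (ltngtP i j) => [ij|ji|ij].
  - by move: (key _ _ ij pij); rewrite E eqxx.
  - by move: (key _ _ ji (par_sym pij)); rewrite E eqxx.
  - by move: nij; rewrite (val_inj ij) eqxx.
have := @leq_card _ 'cV[F]_n g ginj; rewrite card_ord card_mx muln1 => H.
exact: leq_trans H (leq_addr _ _).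
Qed.
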